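(* Let $D_1,D_2\subseteq\mathbb{N}$. If $D_1\cup D_2$ is accessible, then $D_1$ is accessible or $D_2$ is accessible.
   Context: For $D\subseteq\mathbb{N}$, a $k$-term $D$-diffsequence is a sequence of integers $x_1,\dots,x_k$ with $x_{i+1}-x_i\in D$ for all $i$. $D$ is accessible if for every $r\in\mathbb{N}$, every $r$-coloring of $\mathbb{N}$ and every $k\ge1$ there is a monochromatic $k$-term $D$-diffsequence in $\mathbb{N}$. *)

(* Defs.v *)
From mathcomp Require Import all_boot.
Set Implicit Arguments. Unset Strict Implicit. Unset Printing Implicit Defensive.

(* N = {1,2,3,...}.  A subset D of N is a predicate on nat (with 0 \notin D
   imposed as a hypothesis where needed). *)

Definition diffseq (D : nat -> Prop) (k : nat) (x : nat -> nat) : Prop :=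
  (forall i, i < k -> 0 < x i) /\
  (forall i, i.+1 < k -> exists2 d, D d & x i.+1 = x i + d).

Definition accessible (D : nat -> Prop) : Prop :=
  forall (r : nat) (c : nat -> 'I_r), 0 < r ->
  forall k : nat, 0 < k ->
  exists x : nat -> nat, diffseq D k x /\
    (forall i, i < k -> c (x i) = c (x 0)).

(* Main.v *)
Require Import Defs.
From mathcomp Require Import all_boot.
From mathcomp Require Import zify.
From Stdlib Require Import Classical ClassicalEpsilon.

Section Key.
Variables (D : nat -> Prop) (r : nat) (c : nat -> 'I_r) (k : nat).
Hypothesis Hno : forall x, diffseq D k x ->
  ~ (forall i, i < k -> c (x i) = c (x 0)).

Definition PP n m := exists x, diffseq D m x /\ x 0 = n /\
  (forall i, i < m -> c (x i) = c n).

Definition Pb n m : bool :=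
  if excluded_middle_informative (PP n m) then true else false.

Lemma PbP n m : Pb n m <-> PP n m.
Proof. rewrite /Pb; case: excluded_middle_informative => //. Qed.

Definition ff n := \max_(m < k | Pb n m) (m : nat).

Lemma PP_small n m : PP n m -> m < k.
Proof.
move=> [x [[Hp Hs] [H0 Hc]]].
case: (leqP k m) => // Hkm; exfalso; apply: (Hno x).
  split; [move=> i Hi; apply: Hp; lia | move=> i Hi; apply: Hs; lia].
move=> i Hi; rewrite Hc; last lia. rewrite Hc //. lia.
Qed.

Lemma ff_lt n : ff n < k.+1.
Proof.
rewrite ltnS; apply/bigmax_leqP => i _; exact: ltnW (ltn_ord i).
Qed.

Lemma key n d : 0 < n -> D d -> c n = c (n + d) -> ff (n + d) < ff n.
Proof.
move=> Hn Hd Hc.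
have Py1 : PP (n + d) 1.
  exists (fun _ => n + d); split; last by split => // i; rewrite ltnS leqn0 => /eqP ->.
  split; first by move=> i _; lia.
  by move=> i; rewrite ltnS ltn0.
have k1 : 1 < k := @PP_small _ _ Py1.
have Pb1 : Pb (n + d) (Ordinal k1) by apply/PbP.
have := bigmax_eq_arg (Ordinal k1) (P := fun m : 'I_k => Pb (n + d) m) (F := fun m : 'I_k => (m : nat)).
case: arg_maxnP => //= m0 Pm0 Hmax Heq.
rewrite /ff (Heq Pb1).
have ge1 : 1 <= m0 by apply: (Hmax (Ordinal k1)).
move/PbP: Pm0 => [x [[Hp Hs] [H0 Hcx]]].
pose x' i := if i is j.+1 then x j else n.
have Pn : PP n m0.+1.
  exists x'; split; last split => //.
    split.
      by case=> [|j] Hj //=; apply: Hp.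
    case=> [|j] Hj /=.
      by exists d => //; rewrite H0.
    by apply: Hs.
  case=> [|j] Hj //=; rewrite Hcx //.
have Hlt := @PP_small _ _ Pn.
have : m0.+1 <= ff n.
  by apply: (leq_bigmax_cond (Ordinal Hlt) (F := fun m : 'I_k => (m : nat))); apply/PbP.
by rewrite /ff; move=> H; apply: leq_ltn_trans H.
Qed.
End Key.

Lemma not_acc D : ~ accessible D -> exists r (c : nat -> 'I_r) k,
  forall x, diffseq D k x -> ~ (forall i, i < k -> c (x i) = c (x 0)).
Proof.
move=> H; apply: NNPP => H2; apply: H => r c Hr k Hk.
apply: NNPP => H3; apply: H2; exists r, c, k => x Hx Hm; apply: H3.
by exists x.
Qed.

Theorem mainTheorem12 (D1 D2 : nat -> Prop) :
  (forall d, D1 d -> 0 < d) -> (forall d, D2 d -> 0 < d) ->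
  accessible (fun d => D1 d \/ D2 d) -> accessible D1 \/ accessible D2.
Proof.
move=> _ _ HA.
case: (classic (accessible D1)) => [|N1]; first by left.
case: (classic (accessible D2)) => [|N2]; first by right.
exfalso.
have [r1 [c1 [k1 H1]]] := not_acc _ N1.
have [r2 [c2 [k2 H2]]] := not_acc _ N2.
pose T : finType := (('I_r1 * 'I_k1.+1) * ('I_r2 * 'I_k2.+1))%type.
pose col n : T := ((c1 n, inord (@ff D1 r1 c1 k1 n)), (c2 n, inord (@ff D2 r2 c2 k2 n))).
pose c n := enum_rank (col n).
have Hr : 0 < #|T|.
  apply/card_gt0P; exists ((c1 1, ord0), (c2 1, ord0)); done.
have [x [[Hp Hs] Hm]] := HA _ c Hr 2 isT.
have [d Hd Hx1] := Hs 0 isT.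
have := Hm 1 isT; rewrite /c => /enum_rank_inj; rewrite /col Hx1.
have Hx0 : 0 < x 0 by apply: Hp.
case=> E1 F1 E2 F2.
case: Hd => Hd.
  have := @key _ _ _ _ H1 _ _ Hx0 Hd (esym E1).
  move: F1 => /(congr1 (@nat_of_ord _)); rewrite !inordK ?ff_lt // => ->.
  by rewrite ltnn.
have := @key _ _ _ _ H2 _ _ Hx0 Hd (esym E2).
move: F2 => /(congr1 (@nat_of_ord _)); rewrite !inordK ?ff_lt // => ->.
by rewrite ltnn.
Qed.
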